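(* For every $S\subseteq\mathbb{Z}^2$ and real $\alpha$, $\Theta(S,\alpha)=\vartheta(S,\alpha,0)$.
   Context: Graph $\mathbf{G}$ on $\mathbb{Z}^2$: each $p$ is adjacent to $p\pm(1,0)$, $p\pm(0,1)$, $p+(-1,1)$, $p+(1,-1)$; connectedness and paths refer to $\mathbf{G}$ (paths ''in $S$'' use only vertices of $S$). Triangles: for reals $a,b,c$, $L(a,b,c)=\{(x,y): -x\le a,\ -y\le b,\ x+y\le c\}$, $\mathrm{span}(L(a,b,c))=a+b+c$, $D(L(a,b,c),d)=L(a-d,b-d,c-d)$. For $E\subseteq\mathbb{Z}^2$, $\mathrm{span}(E,d)$ is the minimum of $\sum_{I\in\mathcal{I}}\mathrm{span}(I)$ over finite sets $\mathcal{I}$ of triangles with $E\subseteq\bigcup_{I\in\mathcal{I}}D(I,d)$, and $\mathrm{Span}(E)=\mathrm{span}(E,2)$. A triple $(C,A_1,A_2)$ of pairwise disjoint subsets of $S$ is a cut of $S$ with parameters $|C|,m$ if every path in $S$ from $A_1$ to $A_2$ passes through an element of $C$, and $m=\min_{j=1,2}\mathrm{Span}(A_j\cup C)$. The cut is connected if both $A_1\cup C$ and $A_2\cup C$ are connected. $\Theta(S,\alpha)$ is the smallest $k$ such that $S$ has a cut with parameters $k,m$ with $m>\alpha k$ ($\infty$ if none). $\vartheta(S,\alpha,\beta)$ is the smallest $k$ such that $S$ has a connected cut with parameters $k,m$ with $m>\alpha k+\beta$ ($\infty$ if none). *)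

(* Defs.v *)
From HB Require Import structures.
From mathcomp Require Import all_boot all_order all_algebra.
From mathcomp Require Import all_classical all_reals all_analysis.
Set Implicit Arguments. Unset Strict Implicit. Unset Printing Implicit Defensive.
Import Order.TTheory GRing.Theory Num.Theory.
Local Open Scope classical_set_scope.
Local Open Scope ring_scope.

Definition pt := (int * int)%type.

Definition adj (p q : pt) : bool :=
  let d := (q.1 - p.1, q.2 - p.2) in
  [|| d == ((1:int), (0:int)), d == ((-1:int), (0:int)),
      d == ((0:int), (1:int)), d == ((0:int), (-1:int)),
      d == ((-1:int), (1:int)) | d == ((1:int), (-1:int))].

Definition path_in (T : set pt) (x : pt) (s : seq pt) : Prop :=
  path adj x s /\ (forall z, z \in x :: s -> T z).

Definition connected_set (T : set pt) : Prop :=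
  forall x y, T x -> T y -> exists s, path_in T x s /\ last x s = y.

(* Triangles L(a,b,c) are represented by their parameters t = (a,b,c). *)
Definition tspan (R : realType) (t : R * R * R) : R := t.1.1 + t.1.2 + t.2.

(* p belongs to D(L(a,b,c), d) = L(a-d, b-d, c-d) *)
Definition inD (R : realType) (t : R * R * R) (d : R) (p : pt) : Prop :=
  [/\ - (p.1%:~R : R) <= t.1.1 - d,
      - (p.2%:~R : R) <= t.1.2 - d &
      (p.1%:~R : R) + p.2%:~R <= t.2 - d].

(* span(E,d): infimum (a minimum when finite) over finite sets of (nonempty)
   triangles I with E contained in the union of the D(I,d). *)
Definition span_d (R : realType) (E : set pt) (d : R) : \bar R :=
  ereal_inf [set e | exists I : seq (R * R * R),
    [/\ e = (\sum_(t <- I) tspan t)%:E,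
        uniq I,
        (forall t, t \in I -> 0 <= tspan t) &
        (forall p, E p -> exists2 t, t \in I & inD t d p)]].

Definition Span (R : realType) (E : set pt) : \bar R := span_d E 2.

(* (C, A1, A2) is a cut of S; C is finite, given by a duplicate-free list Cs *)
Definition cut (S : set pt) (Cs : seq pt) (A1 A2 : set pt) : Prop :=
  [/\ uniq Cs,
      (forall z, z \in Cs -> S z) /\ A1 `<=` S /\ A2 `<=` S,
      (forall z, z \in Cs -> ~ A1 z /\ ~ A2 z) /\ A1 `&` A2 = set0 &
      (forall x s, A1 x -> path_in S x s -> A2 (last x s) ->
         exists2 z, z \in x :: s & z \in Cs)].

Definition setC_of (Cs : seq pt) : set pt := [set z | z \in Cs].

Definition cut_m (R : realType) (Cs : seq pt) (A1 A2 : set pt) : \bar R :=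
  Order.min (Span R (A1 `|` setC_of Cs)) (Span R (A2 `|` setC_of Cs)).

Definition connected_cut (Cs : seq pt) (A1 A2 : set pt) : Prop :=
  connected_set (A1 `|` setC_of Cs) /\ connected_set (A2 `|` setC_of Cs).

Definition Theta (R : realType) (S : set pt) (alpha : R) : \bar R :=
  ereal_inf [set e | exists Cs A1 A2,
    [/\ e = ((size Cs)%:R : R)%:E, cut S Cs A1 A2 &
        ((alpha * (size Cs)%:R)%:E < cut_m R Cs A1 A2)%E]].

Definition vartheta (R : realType) (S : set pt) (alpha beta : R) : \bar R :=
  ereal_inf [set e | exists Cs A1 A2,
    [/\ e = ((size Cs)%:R : R)%:E, cut S Cs A1 A2, connected_cut Cs A1 A2 &
        ((alpha * (size Cs)%:R + beta)%:E < cut_m R Cs A1 A2)%E]].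

(* Main.v *)
Require Import Defs.
From HB Require Import structures.
From mathcomp Require Import all_boot all_order all_algebra.
From mathcomp Require Import all_classical all_reals all_analysis.
From mathcomp Require Import lra zify.
Set Implicit Arguments. Unset Strict Implicit. Unset Printing Implicit Defensive.
Import Order.TTheory GRing.Theory Num.Theory.
Local Open Scope classical_set_scope.
Local Open Scope ring_scope.

Lemma sum_ge0_seq (R : realType) (I : seq (R * R * R)) :
  (forall t, t \in I -> 0 <= tspan t) -> 0 <= \sum_(t <- I) tspan t.
Proof. by move=> H; rewrite big_seq; apply: sumr_ge0 => t /H. Qed.

Lemma Span_ge0 (R : realType) E : (0 <= Span R E)%E.
Proof.
apply/ereal_infP => y [I [-> _ H _]].
by rewrite lee_fin; apply: sum_ge0_seq.
Qed.

Lemma Span_mono (R : realType) (E F : set pt) : E `<=` F -> (Span R E <= Span R F)%E.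
Proof.
move=> EF; apply: le_ereal_inf_tmp => y [I [-> U H C]].
apply: ereal_inf_lbound; exists I; split => //; move=> p /EF; exact: C.
Qed.

Lemma Span_ge6 (R : realType) (E : set pt) p : E p -> ((6:R)%:E <= Span R E)%E.
Proof.
move=> Ep; apply/ereal_infP => y [I [-> U H C]].
have [t tI [h1 h2 h3]] := C p Ep.
rewrite lee_fin (big_rem t tI) /=.
have : 0 <= \sum_(y <- rem t I) tspan y.
  by apply: sum_ge0_seq => u /mem_rem /H.
rewrite /tspan in h1 h2 h3 *; lra.
Qed.

Lemma Span_empty (R : realType) (E : set pt) : (forall p, ~ E p) -> (Span R E <= 0)%E.
Proof.
move=> H; apply: ereal_inf_lbound; exists [::]; split => //.
by rewrite big_nil.
by move=> p /H.
Qed.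

Lemma sum_undup (R : realType) (s : seq (R * R * R)) :
  (forall t, t \in s -> 0 <= tspan t) ->
  \sum_(t <- undup s) tspan t <= \sum_(t <- s) tspan t.
Proof.
elim: s => [|x s IH] H; first by rewrite big_nil.
have Hs : forall t, t \in s -> 0 <= tspan t.
  by move=> t ts; apply: H; rewrite inE ts orbT.
have := IH Hs; have := H x (mem_head _ _).
rewrite /= big_cons; case: ifP => _; rewrite ?big_cons; lra.
Qed.

Lemma inf_add (R : realType) (X Y Z : set \bar R) :
  (forall y, Y y -> y \is a fin_num) -> (forall z, Z z -> z \is a fin_num) ->
  (0 <= ereal_inf Y)%E -> (0 <= ereal_inf Z)%E ->
  (forall y z, Y y -> Z z -> exists2 x, X x & (x <= y + z)%E) ->
  (ereal_inf X <= ereal_inf Y + ereal_inf Z)%E.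
Proof.
move=> fY fZ Y0 Z0 H.
case EY: (ereal_inf Y) Y0 => [ry| |] // Y0; last first.
  by rewrite addye ?leey //; apply/negP => /eqP Hz; rewrite Hz in Z0.
case EZ: (ereal_inf Z) Z0 => [rz| |] // Z0; last by rewrite addey ?leey.
have Hfy : (ry%:E : \bar R) \is a fin_num by [].
rewrite -leeBlDl //.
rewrite -EZ; apply/ereal_infP => z Zz.
rewrite leeBlDl // -leeBlDr ?fZ // -EY.
apply/ereal_infP => y Yy.
rewrite leeBlDr ?fZ //.
have [x Xx xle] := H y z Yy Zz.
exact: le_trans (ereal_inf_lbound Xx) xle.
Qed.

Lemma Span_sub (R : realType) (E A B : set pt) :
  E `<=` A `|` B -> (Span R E <= Span R A + Span R B)%E.
Proof.
move=> EAB; apply: inf_add.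
- by move=> y [I [-> _ _ _]].
- by move=> y [I [-> _ _ _]].
- exact: Span_ge0.
- exact: Span_ge0.
move=> y z [I1 [-> U1 H1 C1]] [I2 [-> U2 H2 C2]].
exists (\sum_(t <- undup (I1 ++ I2)) tspan t)%:E.
  exists (undup (I1 ++ I2)); split => //.
  - exact: undup_uniq.
  - by move=> t; rewrite mem_undup mem_cat => /orP[/H1|/H2].
  - move=> p /EAB [/C1|/C2] [t tI Ht]; exists t => //;
    by rewrite mem_undup mem_cat tI ?orbT.
rewrite -EFinD lee_fin -big_cat; apply: sum_undup.
by move=> t; rewrite mem_cat => /orP[/H1|/H2].
Qed.

Lemma adj_sym p q : adj p q -> adj q p.
Proof.
rewrite /adj /= -[q.1 - p.1]opprB -[q.2 - p.2]opprB.
move: (p.1 - q.1) (p.2 - q.2) => a b.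
rewrite !xpair_eqE !eqr_oppLR ?opprK ?oppr0.
by move=> /orP[|/orP[|/orP[|/orP[|/orP[]]]]] H; rewrite H ?orbT.
Qed.

Definition reach (T : set pt) x y := exists s, path_in T x s /\ last x s = y.

Definition closedS (S : set pt) (C : seq pt) (K : set pt) :=
  forall y w, K y -> y \notin C -> S w -> adj y w -> K w.

Lemma reach_refl (T : set pt) x : T x -> reach T x x.
Proof. by move=> Tx; exists [::]; split => //; split => // z; rewrite inE => /eqP ->. Qed.

Lemma reach_in (T : set pt) x y : reach T x y -> T x /\ T y.
Proof.
move=> [s [[_ H] <-]]; split; apply: H; first exact: mem_head.
exact: mem_last.
Qed.

Lemma reach_cons (T : set pt) x y z : T x -> adj x y -> reach T y z -> reach T x z.
Proof.
move=> Tx axy [s [[ps Hs] <-]]; exists (y :: s); split => //; split.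
  by rewrite /= axy.
by move=> v; rewrite inE => /orP[/eqP ->|/Hs].
Qed.

Lemma reach_snoc (T : set pt) x y z : reach T x y -> adj y z -> T z -> reach T x z.
Proof.
move=> [s [[ps Hs] ly]] ayz Tz; exists (rcons s z); split; last by rewrite last_rcons.
split; first by rewrite rcons_path ps ly.
move=> v; rewrite -rcons_cons mem_rcons inE => /orP[/eqP ->//|/Hs //].
Qed.

Lemma reach_sym (T : set pt) x y : reach T x y -> reach T y x.
Proof.
move=> [s [[ps Hs] <-]]; elim: s x ps Hs => [|a s IH] x /= ps Hs.
  by apply: reach_refl; apply: Hs; exact: mem_head.
move/andP: ps => [axa ps].
have Hs' : forall z, z \in a :: s -> T z by move=> z zs; apply: Hs; rewrite inE zs orbT.
apply: reach_snoc (IH a ps Hs') (adj_sym axa) _.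
by apply: Hs; exact: mem_head.
Qed.

Lemma reach_trans (T : set pt) x y z : reach T x y -> reach T y z -> reach T x z.
Proof.
move=> [s [[ps Hs] <-]]; elim: s x ps Hs => [|a s IH] x /= ps Hs //.
move/andP: ps => [axa ps] ryz.
have Hs' : forall z, z \in a :: s -> T z by move=> w ws; apply: Hs; rewrite inE ws orbT.
apply: reach_cons (IH a ps Hs' ryz); last exact: axa.
by apply: Hs; exact: mem_head.
Qed.

Lemma reach_mono (T U : set pt) x y : T `<=` U -> reach T x y -> reach U x y.
Proof.
move=> TU [s [[ps Hs] ly]]; exists s; split => //; split => // z /Hs; exact: TU.
Qed.

Lemma path_on (T : set pt) x s : path_in T x s -> forall v, v \in x :: s -> reach T x v.
Proof.
elim: s x => [|a s IH] x [ps Hs] v.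
  by rewrite inE => /eqP ->; apply: reach_refl; apply: Hs; exact: mem_head.
rewrite inE => /orP[/eqP ->|vs].
  by apply: reach_refl; apply: Hs; exact: mem_head.
move/andP: ps => [axa ps].
have Hs' : forall z, z \in a :: s -> T z by move=> w ws; apply: Hs; rewrite inE ws orbT.
apply: reach_cons (IH a (conj ps Hs') v vs); last exact: axa.
by apply: Hs; exact: mem_head.
Qed.

Lemma reach_conn (T : set pt) x : connected_set (reach T x).
Proof.
move=> y z rxy rxz.
have [s [ps ls]] := reach_trans (reach_sym rxy) rxz.
exists s; split => //; split; first by case: ps.
move=> v vs; apply: reach_trans rxy _.
exact: path_on ps v vs.
Qed.

Lemma enter (S K : set pt) (C : seq pt) x s :
  closedS S C K -> path_in S x s -> ~ K x -> K (last x s) -> last x s \notin C ->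
  exists2 z, z \in x :: s & z \in C.
Proof.
move=> cl; elim: s x => [|a s IH] x [ps Hs] nKx /=; first by move=> /nKx.
move/andP: ps => [axa ps] Kl nCl.
have Hs' : forall z, z \in a :: s -> S z by move=> w ws; apply: Hs; rewrite inE ws orbT.
have [Ka|nKa] := pselect (K a); last first.
  have [z zs zC] := IH a (conj ps Hs') nKa Kl nCl.
  by exists z => //; rewrite inE zs orbT.
have [aC|naC] := boolP (a \in C).
  by exists a => //; rewrite !inE eqxx orbT.
exfalso; apply: nKx; apply: (cl a x Ka naC); last exact: adj_sym.
by apply: Hs; exact: mem_head.
Qed.

Lemma arith (R : realType) (alpha n1 n2 : R) (sK sE sE' : \bar R) :
  (0 <= sK)%E -> (sK <= (alpha * n1)%:E)%E -> ((alpha * (n1 + n2))%:E < sE)%E ->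
  (sE <= sK + sE')%E -> (0 <= sE')%E -> ((alpha * n2)%:E < sE')%E.
Proof.
case: sE' => [r| |] //; last by rewrite ltry.
case: sK => [k| |] //= k0 kle lt1 le2 _.
have := lt_le_trans lt1 le2; rewrite -EFinD !lte_fin mulrDr.
move: kle; rewrite lee_fin; lra.
Qed.

Lemma core (R : realType) (S : set pt) (alpha : R) n :
  forall (C : seq pt) (E : set pt), (size C <= n)%N -> uniq C ->
  (forall z, z \in C -> E z) -> E `<=` S -> closedS S C E ->
  ((alpha * (size C)%:R)%:E < Span R E)%E ->
  exists K C', [/\ K `<=` E, connected_set K, uniq C' /\
     (forall z, z \in C' <-> (z \in C /\ K z)), closedS S C' K &
     ((alpha * (size C')%:R)%:E < Span R K)%E].
Proof.
elim: n => [|n IH] C E.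
  rewrite leqn0 => /nilP -> _ _ ES clE /=.
  rewrite mulr0 => Hsp.
  have [[x Ex]|nE] := pselect (exists x, E x); last first.
    have := Span_empty R (fun p Ep => nE (ex_intro _ p Ep)).
    by rewrite leNgt Hsp.
  exists (reach E x), [::]; split => //.
  - by move=> y H; case: (reach_in H).
  - exact: reach_conn.
  - by split => // z; split => // [[]].
  - move=> y w rxy _ Sw ayw; apply: (reach_snoc rxy ayw).
    by apply: (clE y) => //; case: (reach_in rxy).
  - by rewrite mulr0; apply: lt_le_trans (Span_ge6 R (reach_refl Ex)); rewrite lte_fin.
case: C => [|c C0] szC uC CE ES clE Hsp.
  by apply: (IH [::] E) => //.
set C := c :: C0.
have Ec : E c by apply: CE; exact: mem_head.
set K := reach E c.
set C1 := [seq z <- C | `[< K z >]].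
set C2 := [seq z <- C | ~~ `[< K z >]].
have mC1 : forall z, z \in C1 <-> (z \in C /\ K z).
  by move=> z; rewrite mem_filter; split => [/andP[/asboolP ? ?]//|[? ?]];
     apply/andP; split => //; apply/asboolP.
have mC2 : forall z, z \in C2 <-> (z \in C /\ ~ K z).
  by move=> z; rewrite mem_filter; split => [/andP[/asboolP ? ?]//|[? ?]];
     apply/andP; split => //; apply/asboolP.
have KE : K `<=` E by move=> y H; case: (reach_in H).
have clK : closedS S C1 K.
  move=> y w Ky nC1y Sw ayw.
  have nCy : y \notin C by apply/negP => Cy; move/negP: nC1y; apply; apply/mC1.
  exact: reach_snoc Ky ayw (clE y w (KE y Ky) nCy Sw ayw).
have [lt1|] := ltP ((alpha * (size C1)%:R)%:E) (Span R K).
  exists K, C1; split => //.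
  - exact: reach_conn.
  - by split => //; exact: filter_uniq.
move=> le1.
set E' := fun z => E z /\ ~ K z.
have szC12 : size C = (size C1 + size C2)%N.
  by rewrite !size_filter -(count_predC (fun z => `[< K z >])).
have Kc : K c by apply: reach_refl.
have C1pos : (0 < size C1)%N.
  by rewrite size_filter -has_count; apply/hasP; exists c; [exact: mem_head| apply/asboolP].
have szC2 : (size C2 <= n)%N.
  by move: szC; rewrite szC12 /=; lia.
have [K2 [C3 [K2E cK2 [uC3 mC3] clK2 Hsp2]]] : exists K C', [/\ K `<=` E', connected_set K, uniq C' /\
     (forall z, z \in C' <-> (z \in C2 /\ K z)), closedS S C' K &
     ((alpha * (size C')%:R)%:E < Span R K)%E].
  apply: IH => //.
  - exact: filter_uniq.
  - by move=> z /mC2 [/CE ? ?].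
  - by move=> z [/ES].
  - move=> y w [Ey nKy] nC2y Sw ayw.
    have nCy : y \notin C by apply/negP => Cy; move/negP: nC2y; apply; apply/mC2.
    have Ew := clE y w Ey nCy Sw ayw.
    split => // Kw; apply: nKy; exact: reach_snoc Kw (adj_sym ayw) Ey.
  - apply: (arith (sE := Span R E) (Span_ge0 R K) le1 _ _ (Span_ge0 R E')).
      by rewrite -natrD -szC12.
    apply: Span_sub => z Ez; hnf.
    by have [Kz|nKz] := pselect (K z); [left|right].
exists K2, C3; split => //.
- by move=> z /K2E [].
- split => // z; rewrite mC3 mC2; split => [[[]]|[zC K2z]] //.
  by split => //; split => //; case: (K2E z K2z).
Qed.

Lemma shrink (R : realType) (alpha : R) (X : set pt) (C : seq pt) m :
  (forall z, z \in C -> X z) -> ((alpha * (size C)%:R)%:E < Span R X)%E ->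
  (m <= size C)%N -> ((alpha * m%:R)%:E < Span R X)%E.
Proof.
move=> CX H mC; have [a0|a0] := leP 0 alpha.
  apply: le_lt_trans H; rewrite lee_fin; apply: ler_wpM2l => //.
  by rewrite ler_nat.
case: m mC => [|m] mC.
  case: C CX H mC => [|c C] CX H _ //.
  apply: lt_le_trans (Span_ge6 R (CX c (mem_head _ _))).
  by rewrite mulr0 lte_fin.
apply: lt_le_trans (Span_ge0 R X); rewrite lte_fin.
have : (0 : R) < m.+1%:R by rewrite ltr0n.
nra.
Qed.

Lemma setU_diff (K : set pt) (C : seq pt) : (forall z, z \in C -> K z) ->
  (fun z => K z /\ z \notin C) `|` setC_of C = K.
Proof.
move=> CK; apply/seteqP; split => z.
  by case => [[]//|]; apply: CK.
by move=> Kz; case: (boolP (z \in C)) => zC; [right|left].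
Qed.

Theorem theorem3p3 (R : realType) (S : set pt) (alpha : R) :
  Theta S alpha = vartheta S alpha 0%R.
Proof.
apply/eqP; rewrite eq_le; apply/andP; split.
  apply: ereal_inf_le_tmp => e [Cs [A1 [A2 [-> hc _ hl]]]].
  by exists Cs, A1, A2; split => //; rewrite addr0 in hl.
apply/ereal_infP => e [Cs [A1 [A2 [-> hcut hlt]]]].
case: hcut => uCs [CsS [A1S A2S]] [disjC A12] hpath.
move: hlt; rewrite /cut_m lt_min => /andP[lt1 lt2].
set SC := fun z => S z /\ z \notin Cs.
set E1 := fun y => y \in Cs \/ exists x, A1 x /\ reach SC x y.
have E1S : E1 `<=` S.
  move=> y [/CsS //|[x [_ r]]]; by case: (reach_in r) => _ [].
have A2E1 : forall y, A2 y -> ~ E1 y.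
  move=> y A2y [yC|[x [A1x [s [[ps Hs] ly]]]]]; first by case: (disjC y yC).
  have [z zs zC] : exists2 z, z \in x :: s & z \in Cs.
    apply: (hpath x s A1x); last by rewrite ly.
    by split => // z /Hs [].
  by case: (Hs z zs) => _; rewrite zC.
have [K1 [C1 [K1E1 cK1 [uC1 mC1] clK1 sp1]]] := core (n := size Cs) (E := E1) (leqnn _) uCs
  (fun z zC => or_introl zC) E1S
  (fun y w Ey nCy Sw ayw => match Ey with
     | or_introl yC => False_ind _ (negP nCy yC)
     | or_intror (ex_intro x (conj A1x r)) =>
        match boolP (w \in Cs) with
        | AltTrue wC => or_introl wC
        | AltFalse nwC => or_intror (ex_intro _ x (conj A1x (reach_snoc r ayw (conj Sw nwC))))
        end end)
  (lt_le_trans lt1 (Span_mono R (fun z Hz => match Hz with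
     | or_introl A1z => or_intror (ex_intro _ z (conj A1z (reach_refl (T := SC)
          (conj (A1S z A1z) (introN idP (fun zC => (disjC z zC).1 A1z))))))
     | or_intror zC => or_introl zC end))).
have C1Cs : forall z, z \in C1 -> z \in Cs by move=> z /mC1 [].
have C1K1 : forall z, z \in C1 -> K1 z by move=> z /mC1 [].
set E2 := fun y => (S y /\ ~ K1 y) \/ y \in C1.
have E2S : E2 `<=` S by move=> y [[]//|/C1Cs /CsS].
have clE2 : closedS S C1 E2.
  move=> y w [[Sy nK1y]|yC1] nC1y Sw ayw; last by rewrite yC1 in nC1y.
  have [wC1|nwC1] := boolP (w \in C1); first by right.
  left; split => // K1w; apply: nK1y.
  exact: clK1 K1w nwC1 Sy (adj_sym ayw).
have XE2 : A2 `|` setC_of Cs `<=` E2.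
  move=> y [A2y|yC].
    left; split; first exact: A2S.
    by move=> /K1E1 /(A2E1 y A2y).
  have [K1y|nK1y] := pselect (K1 y); first by right; apply/mC1.
  by left; split => //; apply: CsS.
have sp2' : ((alpha * (size C1)%:R)%:E < Span R E2)%E.
  apply: lt_le_trans (Span_mono R XE2).
  apply: (shrink (C := Cs)) => //; first by move=> z zC; right.
  exact: uniq_leq_size uC1 C1Cs.
have [K2 [C2 [K2E2 cK2 [uC2 mC2] clK2 sp2]]] := core (leqnn _) uC1
  (fun z zC => or_intror zC) E2S clE2 sp2'.
have C2C1 : forall z, z \in C2 -> z \in C1 by move=> z /mC2 [].
have C2K2 : forall z, z \in C2 -> K2 z by move=> z /mC2 [].
have C2K1 : forall z, z \in C2 -> K1 z by move=> z /C2C1 /C1K1.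
have K12 : forall z, K1 z -> K2 z -> z \in C2.
  move=> z K1z K2z; apply/mC2; split => //.
  by case: (K2E2 z K2z) => [[_ []]|].
apply: (@le_trans _ _ ((size C2)%:R%:E)).
  apply: ereal_inf_lbound.
  exists C2, (fun z => K1 z /\ z \notin C2), (fun z => K2 z /\ z \notin C2).
  split => //.
  - split => //.
    + split; first by move=> z /C2C1 /C1Cs /CsS.
      split; first by move=> z [/K1E1 /E1S].
      by move=> z [/K2E2 /E2S].
    + split; first by move=> z zC; split => -[_]; rewrite zC.
      rewrite -subset0 => z [[K1z nz] [K2z _]].
      by rewrite (K12 z K1z K2z) in nz.
    + move=> x s [K1x nx] ps [K2l nl].
      apply: (enter clK2 ps) => // K2x.
      by rewrite (K12 x K1x K2x) in nx.
  - by rewrite /connected_cut !setU_diff.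
  - rewrite /cut_m !setU_diff // addr0 lt_min sp2 andbT.
    apply: (shrink (C := C1)) => //.
    exact: uniq_leq_size uC2 C2C1.
rewrite lee_fin ler_nat.
apply: leq_trans (uniq_leq_size uC2 C2C1) (uniq_leq_size uC1 C1Cs).
Qed.
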